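(* Let $\theta\in\mathbb{R}$, let $\mathcal{A}_\theta$ be the smooth noncommutative torus, let $\tau\in\mathbb{C}$ with $\Im\tau>0$, and let $p\in\mathcal{A}_\theta$ be a projection ($p=p^2=p^*$) satisfying at least one of the equations $$\bar{\partial}_{(\tau)}(p)\,p=0,\qquad p\,\partial_{(\tau)}(p)=0,\qquad \partial_{(\tau)}(p)\,p=0,\qquad p\,\bar{\partial}_{(\tau)}(p)=0 .$$ Then $p$ satisfies the field equation $$p\,\Delta(p)-\Delta(p)\,p=0,$$ where $\Delta=g^{\mu\nu}\partial_\mu\partial_\nu$.
   Context: $\mathcal{A}_\theta$ is the unital $*$-algebra of series $a=\sum_{(m,n)\in\mathbb{Z}^2}a_{mn}U_1^mU_2^n$ with $(a_{mn})$ a complex Schwartz (rapidly decreasing) sequence on $\mathbb{Z}^2$, where $U_1,U_2$ are unitaries with $U_2U_1=e^{2\pi i\theta}U_1U_2$. The derivations $\partial_1,\partial_2$ of $\mathcal{A}_\theta$ are defined by $\partial_\mu(U_\nu)=2\pi i\,\delta_\mu^\nu U_\nu$ ($\mu,\nu=1,2$), extended by the Leibniz rule and linearity. The inverse metric associated with $\tau$ is $(g^{\mu\nu})=\frac{1}{(\Im\tau)^2}\begin{pmatrix}|\tau|^2&-\Re\tau\\-\Re\tau&1\end{pmatrix}$, repeated indices summed over $1,2$. The derivations $\partial_{(\tau)}=\frac{1}{\tau-\bar\tau}(-\bar\tau\partial_1+\partial_2)$ and $\bar\partial_{(\tau)}=\frac{1}{\tau-\bar\tau}(\tau\partial_1-\partial_2)$.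 *)

(* Defs.v *)
From Stdlib Require Import Reals ZArith.
From Coquelicot Require Import Coquelicot.
Open Scope R_scope.

(** Elements of the smooth noncommutative torus A_theta are represented by
    their coefficient families  a : Z -> Z -> C,  a m n being the coefficient
    of U1^m U2^n.  Such a family is an element of A_theta iff it is a
    Schwartz (rapidly decreasing) sequence on Z^2. *)
Definition coef := Z -> Z -> C.

Definition schwartz (a : coef) : Prop :=
  forall k : nat, exists M : R, forall m n : Z,
    (1 + IZR (Z.abs m) + IZR (Z.abs n)) ^ k * Cmod (a m n) <= M.

Definition ephase (theta x : R) : C :=
  (cos (2 * PI * theta * x), sin (2 * PI * theta * x)).

Definition sq_sum (f : Z -> Z -> C) (N : nat) : C :=
  sum_n (fun i => sum_n (fun j =>
     f (Z.of_nat i - Z.of_nat N)%Z (Z.of_nat j - Z.of_nat N)%Z) (2 * N)) (2 * N).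

Definition Clim (u : nat -> C) : C :=
  (real (Lim_seq (fun N => fst (u N))), real (Lim_seq (fun N => snd (u N)))).

(** Sum over Z^2 (absolutely convergent for the families we use, so it equals
    the limit of square partial sums). *)
Definition zsum2 (f : Z -> Z -> C) : C := Clim (sq_sum f).

(** Product in A_theta, from U2 U1 = e^{2 pi i theta} U1 U2:
    (a_{mn} U1^m U2^n)(b_{kl} U1^k U2^l) = a_{mn} b_{kl} e^{2 pi i theta n k} U1^{m+k} U2^{n+l}. *)
Definition nct_mul (theta : R) (a b : coef) : coef :=
  fun r s => zsum2 (fun m n =>
     (a m n * b (r - m)%Z (s - n)%Z * ephase theta (IZR (n * (r - m))))%C).

(** Involution: (U1^m U2^n)^* = U2^{-n} U1^{-m} = e^{2 pi i theta m n} U1^{-m} U2^{-n}. *)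
Definition nct_star (theta : R) (a : coef) : coef :=
  fun m n => (Cconj (a (- m)%Z (- n)%Z) * ephase theta (IZR (m * n)))%C.

Definition nct_add (a b : coef) : coef := fun m n => (a m n + b m n)%C.
Definition nct_scal (z : C) (a : coef) : coef := fun m n => (z * a m n)%C.

(** Basic derivations: d_mu (U_nu) = 2 pi i delta U_nu. *)
Definition d1 (a : coef) : coef := fun m n => (((0, 2 * PI * IZR m)%R : C) * a m n)%C.
Definition d2 (a : coef) : coef := fun m n => (((0, 2 * PI * IZR n)%R : C) * a m n)%C.

Definition dtau (tau : C) (a : coef) : coef :=
  nct_scal (/ (tau - Cconj tau))%C
    (nct_add (nct_scal (- Cconj tau)%C (d1 a)) (d2 a)).
Definition dbartau (tau : C) (a : coef) : coef :=
  nct_scal (/ (tau - Cconj tau))%C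
    (nct_add (nct_scal tau (d1 a)) (nct_scal (-1)%C (d2 a))).

Definition ginv (tau : C) (mu nu : nat) : R :=
  let t1 := fst tau in let t2 := snd tau in
  match mu, nu with
  | 1%nat, 1%nat => (t1 ^ 2 + t2 ^ 2) / t2 ^ 2
  | 1%nat, 2%nat => - t1 / t2 ^ 2
  | 2%nat, 1%nat => - t1 / t2 ^ 2
  | _, _ => 1 / t2 ^ 2
  end.

Definition lap (tau : C) (a : coef) : coef :=
  nct_add (nct_add (nct_scal (RtoC (ginv tau 1 1)) (d1 (d1 a)))
                   (nct_scal (RtoC (ginv tau 1 2)) (d1 (d2 a))))
          (nct_add (nct_scal (RtoC (ginv tau 2 1)) (d2 (d1 a)))
                   (nct_scal (RtoC (ginv tau 2 2)) (d2 (d2 a)))).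

Definition nct_zero : coef := fun _ _ => RtoC 0.

(* Main.v *)
Require Import Defs.
From Stdlib Require Import Reals ZArith Lia Lra FunctionalExtensionality.
From Coquelicot Require Import Coquelicot.
Open Scope R_scope.

Fixpoint ss (g : Z -> R) (N : nat) : R :=
  match N with
  | O => g 0%Z
  | S N' => ss g N' + g (Z.of_nat (S N')) + g (- Z.of_nat (S N'))%Z
  end.

Fixpoint ssC (g : Z -> C) (N : nat) : C :=
  match N with
  | O => g 0%Z
  | S N' => (ssC g N' + g (Z.of_nat (S N')) + g (- Z.of_nat (S N'))%Z)%C
  end.

Definition SS (f : Z -> Z -> R) (N : nat) : R := ss (fun m => ss (f m) N) N.

Lemma sum_n_shift1 {G : AbelianMonoid} (h : nat -> G) n :
  sum_n h (S n) = plus (h 0%nat) (sum_n (fun j => h (S j)) n).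
Proof.
  induction n.
  - rewrite sum_Sn, !sum_O. reflexivity.
  - rewrite sum_Sn, IHn, sum_Sn. rewrite plus_assoc. reflexivity.
Qed.

Lemma ssC_S g N : ssC g (S N) = (ssC g N + g (Z.of_nat (S N)) + g (- Z.of_nat (S N))%Z)%C.
Proof. reflexivity. Qed.
Lemma plusC (x y : C) : plus x y = Cplus x y.
Proof. reflexivity. Qed.

Lemma sum_ssC (g : Z -> C) N :
  sum_n (fun j => g (Z.of_nat j - Z.of_nat N)%Z) (2 * N) = ssC g N.
Proof.
  revert g. induction N; intro g.
  - simpl. rewrite sum_O. reflexivity.
  - replace (2 * S N)%nat with (S (S (2 * N))) by lia.
    rewrite sum_Sn, sum_n_shift1.
    rewrite (sum_n_ext _ (fun j => g (Z.of_nat j - Z.of_nat N)%Z)).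
    2:{ intro j. f_equal. lia. }
    rewrite IHN. rewrite ssC_S.
    replace (Z.of_nat 0 - Z.of_nat (S N))%Z with (- Z.of_nat (S N))%Z by lia.
    replace (Z.of_nat (S (S (2 * N))) - Z.of_nat (S N))%Z with (Z.of_nat (S N)) by lia.
    rewrite !plusC. apply injective_projections; simpl; ring.
Qed.

Lemma fst_ssC g N : fst (ssC g N) = ss (fun z => fst (g z)) N.
Proof. induction N; simpl; auto. rewrite IHN. reflexivity. Qed.
Lemma snd_ssC g N : snd (ssC g N) = ss (fun z => snd (g z)) N.
Proof. induction N; simpl; auto. rewrite IHN. reflexivity. Qed.

Lemma sq_sum_ssC f N : sq_sum f N = ssC (fun m => ssC (f m) N) N.
Proof.
  unfold sq_sum.
  rewrite (sum_n_ext _ (fun i => ssC (f (Z.of_nat i - Z.of_nat N)%Z) N)).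
  2:{ intro i. apply (sum_ssC (f (Z.of_nat i - Z.of_nat N)%Z)). }
  apply (sum_ssC (fun m => ssC (f m) N)).
Qed.

Lemma fst_sq f N : fst (sq_sum f N) = SS (fun m n => fst (f m n)) N.
Proof.
  rewrite sq_sum_ssC, fst_ssC. unfold SS. f_equal.
  apply functional_extensionality; intro m. apply fst_ssC.
Qed.
Lemma snd_sq f N : snd (sq_sum f N) = SS (fun m n => snd (f m n)) N.
Proof.
  rewrite sq_sum_ssC, snd_ssC. unfold SS. f_equal.
  apply functional_extensionality; intro m. apply snd_ssC.
Qed.

Lemma ss_lin a g1 b g2 N :
  ss (fun z => a * g1 z + b * g2 z) N = a * ss g1 N + b * ss g2 N.
Proof. induction N; simpl; [ring|]. rewrite IHN. ring. Qed.

Lemma ss_scal a g N : ss (fun z => a * g z) N = a * ss g N.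
Proof.
  replace (fun z => a * g z) with (fun z => a * g z + 0 * g z).
  - rewrite ss_lin. ring.
  - apply functional_extensionality; intro; ring.
Qed.

Lemma SS_lin a g1 b g2 N :
  SS (fun m n => a * g1 m n + b * g2 m n) N = a * SS g1 N + b * SS g2 N.
Proof.
  unfold SS. rewrite <- ss_lin. f_equal.
  apply functional_extensionality; intro m. apply ss_lin.
Qed.

Definition conv (g : Z -> Z -> R) (l : R) := is_lim_seq (SS g) l.

Lemma conv_lin a g1 l1 b g2 l2 : conv g1 l1 -> conv g2 l2 ->
  conv (fun m n => a * g1 m n + b * g2 m n) (a * l1 + b * l2).
Proof.
  unfold conv; intros H1 H2.
  apply (is_lim_seq_ext (fun N => a * SS g1 N + b * SS g2 N)).
  { intro; rewrite SS_lin; reflexivity. }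
  apply is_lim_seq_plus'.
  - apply (is_lim_seq_scal_l _ a l1 H1).
  - apply (is_lim_seq_scal_l _ b l2 H2).
Qed.

Lemma conv_ext g h l l' : (forall m n, g m n = h m n) -> l = l' -> conv g l -> conv h l'.
Proof.
  intros E El. subst l'.
  replace h with g; auto.
  apply functional_extensionality; intro; apply functional_extensionality; intro; auto.
Qed.

Lemma conv_unique g l1 l2 : conv g l1 -> conv g l2 -> l1 = l2.
Proof.
  unfold conv; intros H1 H2.
  apply is_lim_seq_unique in H1. apply is_lim_seq_unique in H2.
  rewrite H1 in H2. injection H2; auto.
Qed.

Definition w (m : Z) : R := / (1 + IZR (Z.abs m)) ^ 2.

Lemma absZ_ge0 m : 0 <= IZR (Z.abs m).
Proof. apply IZR_le. lia. Qed.

Lemma w_pos m : 0 < w m.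
Proof. unfold w. apply Rinv_0_lt_compat. pose proof (absZ_ge0 m). apply pow_lt. lra. Qed.

Lemma w_opp m : w (- m) = w m.
Proof. unfold w. rewrite Z.abs_opp. reflexivity. Qed.

Lemma w_nat k : w (Z.of_nat k) = / (1 + INR k) ^ 2.
Proof. unfold w. rewrite Z.abs_eq by lia. rewrite <- INR_IZR_INZ. reflexivity. Qed.

Lemma w_natn k : w (- Z.of_nat k) = / (1 + INR k) ^ 2.
Proof. rewrite w_opp. apply w_nat. Qed.

Lemma ss_w_bound N : ss w N <= 3 - 2 / (INR N + 1).
Proof.
  induction N.
  - simpl. unfold w. simpl. lra.
  - change (ss w (S N)) with (ss w N + w (Z.of_nat (S N)) + w (- Z.of_nat (S N))%Z).
    rewrite w_nat, w_natn. rewrite S_INR.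
    pose proof (pos_INR N) as HN. set (a := INR N) in *.
    assert (E: 2 / (a + 1) - 2 / (a + 1 + 1) - 2 * / (1 + (a + 1)) ^ 2
               = 2 / ((a+1) * (a+2)^2)) by (field; lra).
    assert (0 < 2 / ((a+1) * (a+2)^2)).
    { apply Rdiv_lt_0_compat; [lra|]. apply Rmult_lt_0_compat; [lra|]. apply pow_lt; lra. }
    lra.
Qed.

Lemma ss_w3 N : ss w N <= 3.
Proof.
  pose proof (ss_w_bound N). pose proof (pos_INR N).
  assert (0 <= 2 / (INR N + 1)) by (apply Rlt_le, Rdiv_lt_0_compat; lra). lra.
Qed.

Lemma ss_nonneg h N : (forall z, 0 <= h z) -> 0 <= ss h N.
Proof. intro H. induction N; simpl; auto. pose proof (H (Z.pos (Pos.of_succ_nat N))).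
  pose proof (H (Z.neg (Pos.of_succ_nat N))). lra. Qed.

Lemma ss_mono_fun h1 h2 N : (forall z, h1 z <= h2 z) -> ss h1 N <= ss h2 N.
Proof. intro H. induction N; simpl; auto. pose proof (H (Z.pos (Pos.of_succ_nat N))).
  pose proof (H (Z.neg (Pos.of_succ_nat N))). lra. Qed.

Lemma ss_mono_N h N : (forall z, 0 <= h z) -> ss h N <= ss h (S N).
Proof. intro H. change (ss h (S N)) with (ss h N + h (Z.of_nat (S N)) + h (- Z.of_nat (S N))%Z).
  pose proof (H (Z.of_nat (S N))). pose proof (H (- Z.of_nat (S N))%Z). lra. Qed.

Lemma ss_abs h N : Rabs (ss h N) <= ss (fun z => Rabs (h z)) N.
Proof.
  induction N; simpl; [lra|].
  eapply Rle_trans; [apply Rabs_triang|].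
  eapply Rle_trans; [apply Rplus_le_compat_r; apply Rabs_triang|]. lra.
Qed.

Lemma SS_incr h N : (forall m n, 0 <= h m n) -> SS h N <= SS h (S N).
Proof.
  intro H. unfold SS.
  apply Rle_trans with (ss (fun m => ss (h m) N) (S N)).
  - apply ss_mono_N. intro. apply ss_nonneg. auto.
  - apply ss_mono_fun. intro. apply ss_mono_N. auto.
Qed.

Lemma ss_Kw K c N : ss (fun n => K * c * w n) N = K * c * ss w N.
Proof. apply ss_scal. Qed.

Lemma SS_bound h K N : 0 <= K -> (forall m n, Rabs (h m n) <= K * w m * w n) ->
  Rabs (SS h N) <= 9 * K.
Proof.
  intros HK H. unfold SS.
  eapply Rle_trans; [apply ss_abs|].
  apply Rle_trans with (ss (fun m => K * w m * ss w N) N).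
  - apply ss_mono_fun. intro m. rewrite <- ss_Kw.
    eapply Rle_trans; [apply ss_abs|]. apply ss_mono_fun. auto.
  - replace (fun m => K * w m * ss w N) with (fun m => (K * ss w N) * w m)
      by (apply functional_extensionality; intro; ring).
    rewrite ss_scal.
    pose proof (ss_w3 N). pose proof (ss_nonneg w N (fun z => Rlt_le _ _ (w_pos z))).
    assert (K * ss w N <= K * 3) by (apply Rmult_le_compat_l; lra).
    assert (K * ss w N * ss w N <= K * 3 * 3).
    { apply Rmult_le_compat; try lra. apply Rmult_le_pos; lra. }
    lra.
Qed.

Lemma conv_exists g K : 0 <= K -> (forall m n, Rabs (g m n) <= K * w m * w n) ->
  exists l, conv g l.
Proof.
  intros HK H.
  set (gp := fun m n => Rmax (g m n) 0).
  set (gn := fun m n => Rmax (- g m n) 0).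
  assert (Hp: forall m n, 0 <= gp m n) by (intros; apply Rmax_r).
  assert (Hn: forall m n, 0 <= gn m n) by (intros; apply Rmax_r).
  assert (Bp: forall m n, Rabs (gp m n) <= K * w m * w n).
  { intros m n. specialize (H m n). unfold gp. unfold Rmax. destruct Rle_dec;
    revert H; unfold Rabs; repeat destruct Rcase_abs; intros; lra. }
  assert (Bn: forall m n, Rabs (gn m n) <= K * w m * w n).
  { intros m n. specialize (H m n). unfold gn. unfold Rmax. destruct Rle_dec;
    revert H; unfold Rabs; repeat destruct Rcase_abs; intros; lra. }
  assert (Cp: ex_finite_lim_seq (SS gp)).
  { apply ex_finite_lim_seq_incr with (9 * K).
    - intro; apply SS_incr; auto.
    - intro N. pose proof (SS_bound gp K N HK Bp). revert H0. unfold Rabs; destruct Rcase_abs; lra. }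
  assert (Cn: ex_finite_lim_seq (SS gn)).
  { apply ex_finite_lim_seq_incr with (9 * K).
    - intro; apply SS_incr; auto.
    - intro N. pose proof (SS_bound gn K N HK Bn). revert H0. unfold Rabs; destruct Rcase_abs; lra. }
  destruct Cp as [lp Cp]. destruct Cn as [ln Cn].
  exists (1 * lp + (-1) * ln).
  apply conv_ext with (fun m n => 1 * gp m n + (-1) * gn m n) (1 * lp + (-1) * ln); auto.
  - intros m n. unfold gp, gn, Rmax. repeat destruct Rle_dec; lra.
  - apply conv_lin; auto.
Qed.

Definition has_zsum (f : Z -> Z -> C) (z : C) :=
  conv (fun m n => fst (f m n)) (fst z) /\ conv (fun m n => snd (f m n)) (snd z).

Definition Gb (f : Z -> Z -> C) := exists K, 0 <= K /\ forall m n, Cmod (f m n) <= K * w m * w n.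

Lemma zsum2_unique f z : has_zsum f z -> zsum2 f = z.
Proof.
  intros [H1 H2]. unfold zsum2, Clim.
  rewrite (Lim_seq_ext _ _ (fst_sq f)), (Lim_seq_ext _ _ (snd_sq f)).
  unfold conv in *. rewrite (is_lim_seq_unique _ _ H1), (is_lim_seq_unique _ _ H2).
  simpl. destruct z; reflexivity.
Qed.

Lemma has_zsum_unique f z1 z2 : has_zsum f z1 -> has_zsum f z2 -> z1 = z2.
Proof. intros H1 H2. rewrite <- (zsum2_unique _ _ H1). apply zsum2_unique; auto. Qed.

Lemma im_le_Cmod' c : Rabs (snd c) <= Cmod c.
Proof. pose proof (Rmax_Cmod c). pose proof (Rmax_r (Rabs (fst c)) (Rabs (snd c))). lra. Qed.
Lemma re_le_Cmod' c : Rabs (fst c) <= Cmod c.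
Proof. pose proof (Rmax_Cmod c). pose proof (Rmax_l (Rabs (fst c)) (Rabs (snd c))). lra. Qed.

Lemma has_zsum_Gb f : Gb f -> has_zsum f (zsum2 f).
Proof.
  intros [K [HK H]].
  destruct (conv_exists (fun m n => fst (f m n)) K HK) as [l1 H1].
  { intros m n. eapply Rle_trans; [apply re_le_Cmod'|auto]. }
  destruct (conv_exists (fun m n => snd (f m n)) K HK) as [l2 H2].
  { intros m n. eapply Rle_trans; [apply im_le_Cmod'|auto]. }
  assert (has_zsum f (l1, l2)) by (split; auto).
  rewrite (zsum2_unique _ _ H0). auto.
Qed.

Lemma has_zsum_lin c1 f1 z1 c2 f2 z2 : has_zsum f1 z1 -> has_zsum f2 z2 ->
  has_zsum (fun m n => c1 * f1 m n + c2 * f2 m n)%C (c1 * z1 + c2 * z2)%C.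
Proof.
  intros [A1 B1] [A2 B2]. split.
  - pose proof (conv_lin (fst c1) _ _ (- snd c1) _ _ A1 B1) as X1.
    pose proof (conv_lin (fst c2) _ _ (- snd c2) _ _ A2 B2) as X2.
    pose proof (conv_lin 1 _ _ 1 _ _ X1 X2) as X.
    eapply conv_ext; [| |exact X]; intros; simpl; ring.
  - pose proof (conv_lin (snd c1) _ _ (fst c1) _ _ A1 B1) as X1.
    pose proof (conv_lin (snd c2) _ _ (fst c2) _ _ A2 B2) as X2.
    pose proof (conv_lin 1 _ _ 1 _ _ X1 X2) as X.
    eapply conv_ext; [| |exact X]; intros; simpl; ring.
Qed.

Lemma has_zsum_ext f g z z' : (forall m n, f m n = g m n) -> z = z' -> has_zsum f z -> has_zsum g z'.
Proof.
  intros E Ez [A B]. subst z'. split.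
  - eapply conv_ext; [| |exact A]; auto. intros; cbv beta; rewrite E; auto.
  - eapply conv_ext; [| |exact B]; auto. intros; cbv beta; rewrite E; auto.
Qed.

Lemma has_zsum_scal c f z : has_zsum f z -> has_zsum (fun m n => c * f m n)%C (c * z)%C.
Proof.
  intro H. pose proof (has_zsum_lin c _ _ 0 _ _ H H) as X.
  eapply has_zsum_ext; [| |exact X]; intros; simpl; ring.
Qed.

Lemma has_zsum_plus f1 z1 f2 z2 : has_zsum f1 z1 -> has_zsum f2 z2 ->
  has_zsum (fun m n => f1 m n + f2 m n)%C (z1 + z2)%C.
Proof.
  intros H1 H2. pose proof (has_zsum_lin 1 _ _ 1 _ _ H1 H2) as X.
  eapply has_zsum_ext; [| |exact X]; intros; simpl; ring.
Qed.

Lemma has_zsum_conj f z : has_zsum f z -> has_zsum (fun m n => Cconj (f m n)) (Cconj z).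
Proof.
  intros [A B]. split.
  - eapply conv_ext; [| |exact A]; intros; reflexivity.
  - pose proof (conv_lin (-1) _ _ 0 _ _ B B) as X.
    eapply conv_ext; [| |exact X]; intros; simpl; ring.
Qed.

Lemma ss_shift h N : ss (fun z => h (z + 1)%Z) N = ss h N + h (Z.of_nat N + 1)%Z - h (- Z.of_nat N)%Z.
Proof.
  induction N.
  - simpl. ring.
  - change (ss (fun z => h (z + 1)%Z) (S N)) with
      (ss (fun z => h (z + 1)%Z) N + h (Z.of_nat (S N) + 1)%Z + h (- Z.of_nat (S N) + 1)%Z).
    change (ss h (S N)) with (ss h N + h (Z.of_nat (S N)) + h (- Z.of_nat (S N))%Z).
    rewrite IHN.
    replace (- Z.of_nat (S N) + 1)%Z with (- Z.of_nat N)%Z by lia.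
    replace (Z.of_nat N + 1)%Z with (Z.of_nat (S N)) by lia.
    ring.
Qed.

Lemma lim_invS : is_lim_seq (fun N => / INR (S N)) 0.
Proof.
  assert (H: is_lim_seq (fun N => INR (S N)) p_infty).
  { apply (is_lim_seq_incr_1 INR p_infty). apply is_lim_seq_INR. }
  pose proof (is_lim_seq_inv _ _ H) as X. simpl in X. apply X. discriminate.
Qed.

Lemma conv_err g g' l e C : conv g l -> (forall N, SS g' N = SS g N + e N) ->
  (forall N, Rabs (e N) <= C * / INR (S N)) -> conv g' l.
Proof.
  intros H E B. unfold conv.
  apply (is_lim_seq_ext (fun N => SS g N + e N)). { intro; rewrite E; auto. }
  replace l with (l + 0) by ring.
  apply is_lim_seq_plus'; auto.
  apply is_lim_seq_le_le with (fun N => - (C * / INR (S N))) (fun N => C * / INR (S N)).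
  - intro N. specialize (B N). revert B. unfold Rabs; destruct Rcase_abs; lra.
  - replace (Finite 0) with (Rbar_opp (Rbar_mult C 0)) by (simpl; f_equal; ring).
    apply -> is_lim_seq_opp. apply is_lim_seq_scal_l. apply lim_invS.
  - replace (Finite 0) with (Rbar_mult C 0) by (simpl; f_equal; ring).
    apply is_lim_seq_scal_l. apply lim_invS.
Qed.

Definition Wb (g : Z -> Z -> R) K := 0 <= K /\ forall m n, Rabs (g m n) <= K * w m * w n.

Lemma ss_row_bound g K c N : Wb g K -> Rabs (ss (g c) N) <= 3 * K * w c.
Proof.
  intros [HK H]. eapply Rle_trans; [apply ss_abs|].
  apply Rle_trans with (ss (fun n => K * w c * w n) N).
  - apply ss_mono_fun; auto.
  - rewrite ss_Kw. pose proof (ss_w3 N). pose proof (w_pos c).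
    assert (0 <= K * w c) by (apply Rmult_le_pos; lra).
    apply Rle_trans with (K * w c * 3); [apply Rmult_le_compat_l; lra| lra].
Qed.

Lemma ss_col_bound g K c N : Wb g K -> Rabs (ss (fun m => g m c) N) <= 3 * K * w c.
Proof.
  intros [HK H]. apply (ss_row_bound (fun m n => g n m) K c N).
  split; auto. intros. rewrite H. lra.
Qed.

Lemma w_le_S N : w (Z.of_nat N) <= / INR (S N).
Proof.
  rewrite w_nat, S_INR. pose proof (pos_INR N).
  apply Rinv_le_contravar; [lra|]. nra.
Qed.

Lemma w_le_S' N : w (Z.of_nat N + 1)%Z <= / INR (S N).
Proof.
  replace (Z.of_nat N + 1)%Z with (Z.of_nat (S N)) by lia.
  eapply Rle_trans; [apply w_le_S|]. rewrite !S_INR. pose proof (pos_INR N).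
  apply Rinv_le_contravar; lra.
Qed.

Lemma conv_shift_m g K l : Wb g K -> conv g l -> conv (fun m n => g (m + 1)%Z n) l.
Proof.
  intros HW H.
  apply conv_err with g (fun N => ss (g (Z.of_nat N + 1)%Z) N - ss (g (- Z.of_nat N)%Z) N) (6 * K); auto.
  - intro N. unfold SS. rewrite (ss_shift (fun m => ss (g m) N)). ring.
  - intro N. pose proof (proj1 HW) as HK.
    pose proof (ss_row_bound g K (Z.of_nat N + 1)%Z N HW).
    pose proof (ss_row_bound g K (- Z.of_nat N)%Z N HW).
    pose proof (w_le_S' N). pose proof (w_le_S N). rewrite w_opp in H1.
    eapply Rle_trans; [apply Rabs_triang|]. rewrite Rabs_Ropp.
    assert (3 * K * w (Z.of_nat N + 1)%Z <= 3 * K * / INR (S N)) by (apply Rmult_le_compat_l; lra).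
    assert (3 * K * w (Z.of_nat N) <= 3 * K * / INR (S N)) by (apply Rmult_le_compat_l; lra).
    lra.
Qed.

Lemma conv_shift_n g K l : Wb g K -> conv g l -> conv (fun m n => g m (n + 1)%Z) l.
Proof.
  intros HW H.
  apply conv_err with g (fun N => ss (fun m => g m (Z.of_nat N + 1)%Z) N - ss (fun m => g m (- Z.of_nat N)%Z) N) (6 * K); auto.
  - intro N. unfold SS.
    replace (fun m => ss (fun n => g m (n + 1)%Z) N) with
      (fun m => 1 * ss (g m) N + 1 * (1 * g m (Z.of_nat N + 1)%Z + (-1) * g m (- Z.of_nat N)%Z)).
    2:{ apply functional_extensionality; intro m. rewrite (ss_shift (g m)). ring. }
    rewrite ss_lin, ss_lin. ring.
  - intro N. pose proof (proj1 HW) as HK.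
    pose proof (ss_col_bound g K (Z.of_nat N + 1)%Z N HW).
    pose proof (ss_col_bound g K (- Z.of_nat N)%Z N HW).
    pose proof (w_le_S' N). pose proof (w_le_S N). rewrite w_opp in H1.
    eapply Rle_trans; [apply Rabs_triang|]. rewrite Rabs_Ropp.
    assert (3 * K * w (Z.of_nat N + 1)%Z <= 3 * K * / INR (S N)) by (apply Rmult_le_compat_l; lra).
    assert (3 * K * w (Z.of_nat N) <= 3 * K * / INR (S N)) by (apply Rmult_le_compat_l; lra).
    lra.
Qed.

Lemma Gb_Wb f : Gb f -> exists K, Wb (fun m n => fst (f m n)) K /\ Wb (fun m n => snd (f m n)) K.
Proof.
  intros [K [HK H]]. exists K. split; split; auto; intros m n.
  - eapply Rle_trans; [apply re_le_Cmod'|auto].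
  - eapply Rle_trans; [apply im_le_Cmod'|auto].
Qed.

Lemma has_zsum_shift_m f z : Gb f -> has_zsum f z -> has_zsum (fun m n => f (m + 1)%Z n) z.
Proof.
  intros G [A B]. destruct (Gb_Wb f G) as [K [W1 W2]].
  split; [apply (conv_shift_m (fun m n => fst (f m n)) K) | apply (conv_shift_m (fun m n => snd (f m n)) K)]; auto.
Qed.

Lemma has_zsum_shift_n f z : Gb f -> has_zsum f z -> has_zsum (fun m n => f m (n + 1)%Z) z.
Proof.
  intros G [A B]. destruct (Gb_Wb f G) as [K [W1 W2]].
  split; [apply (conv_shift_n (fun m n => fst (f m n)) K) | apply (conv_shift_n (fun m n => snd (f m n)) K)]; auto.
Qed.

Lemma w_shift m r : w (m + r) <= (1 + IZR (Z.abs r)) ^ 2 * w m.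
Proof.
  unfold w.
  assert (Z.abs m <= Z.abs (m + r) + Z.abs r)%Z by lia.
  apply IZR_le in H. rewrite plus_IZR in H.
  pose proof (absZ_ge0 m). pose proof (absZ_ge0 r). pose proof (absZ_ge0 (m + r)).
  set (A := 1 + IZR (Z.abs (m + r))) in *.
  set (B := 1 + IZR (Z.abs m)) in *.
  set (Rr := 1 + IZR (Z.abs r)) in *.
  assert (HB: B <= Rr * A) by (unfold A, B, Rr in *; nra).
  replace (/ A ^ 2) with (Rr ^ 2 * / (Rr * A) ^ 2) by (field; unfold A, Rr; lra).
  apply Rmult_le_compat_l; [apply pow_le; unfold Rr; lra|].
  apply Rinv_le_contravar; [apply pow_lt; unfold B; lra|].
  apply pow_incr. unfold B in *; lra.
Qed.

Lemma Gb_shift f r s : Gb f -> Gb (fun m n => f (m + r)%Z (n + s)%Z).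
Proof.
  intros [K [HK H]].
  exists (K * (1 + IZR (Z.abs r)) ^ 2 * (1 + IZR (Z.abs s)) ^ 2). split.
  - pose proof (absZ_ge0 r). pose proof (absZ_ge0 s).
    apply Rmult_le_pos; [apply Rmult_le_pos|]; auto; apply pow_le; lra.
  - intros m n. eapply Rle_trans; [apply H|].
    pose proof (w_shift m r). pose proof (w_shift n s).
    pose proof (w_pos (m + r)). pose proof (w_pos (n + s)).
    replace (K * (1 + IZR (Z.abs r)) ^ 2 * (1 + IZR (Z.abs s)) ^ 2 * w m * w n)
      with (K * ((1 + IZR (Z.abs r)) ^ 2 * w m) * ((1 + IZR (Z.abs s)) ^ 2 * w n)) by ring.
    apply Rmult_le_compat; try lra.
    + apply Rmult_le_pos; lra.
    + apply Rmult_le_compat_l; lra.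
Qed.

Lemma zsum2_shift_m1 f : Gb f -> zsum2 (fun m n => f (m + 1)%Z n) = zsum2 f.
Proof. intro G. apply zsum2_unique. apply has_zsum_shift_m; auto. apply has_zsum_Gb; auto. Qed.

Lemma zsum2_shift_n1 f : Gb f -> zsum2 (fun m n => f m (n + 1)%Z) = zsum2 f.
Proof. intro G. apply zsum2_unique. apply has_zsum_shift_n; auto. apply has_zsum_Gb; auto. Qed.

Lemma Gb_ext f g : (forall m n, f m n = g m n) -> Gb f -> Gb g.
Proof. intros E [K [HK H]]. exists K. split; auto. intros. rewrite <- E. auto. Qed.

Lemma zsum2_ext f g : (forall m n, f m n = g m n) -> zsum2 f = zsum2 g.
Proof. intro E. f_equal. apply functional_extensionality; intro; apply functional_extensionality; intro; auto. Qed.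

Lemma zsum2_shift_m f r : Gb f -> zsum2 (fun m n => f (m + r)%Z n) = zsum2 f.
Proof.
  revert f. induction r using Z.peano_ind; intros f G.
  - apply zsum2_ext. intros. rewrite Z.add_0_r. auto.
  - set (F := fun m n => f (m + 1)%Z n).
    assert (GF : Gb F). { apply (Gb_ext (fun m n => f (m + 1)%Z (n + 0)%Z)); [intros; unfold F; rewrite Z.add_0_r; auto|]. apply Gb_shift; auto. }
    rewrite (zsum2_ext _ (fun m n => F (m + r)%Z n)).
    2:{ intros. unfold F. f_equal. lia. }
    rewrite IHr; auto. apply zsum2_shift_m1; auto.
  - set (F := fun m n => f (m - 1)%Z n).
    assert (GF : Gb F). { apply (Gb_ext (fun m n => f (m + -1)%Z (n + 0)%Z)); [intros; unfold F; f_equal; lia|]. apply Gb_shift; auto. }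
    rewrite (zsum2_ext _ (fun m n => F (m + r)%Z n)).
    2:{ intros. unfold F. f_equal. lia. }
    rewrite IHr; auto.
    rewrite <- (zsum2_shift_m1 F GF). apply zsum2_ext. intros. unfold F. f_equal. lia.
Qed.

Lemma zsum2_shift_n f s : Gb f -> zsum2 (fun m n => f m (n + s)%Z) = zsum2 f.
Proof.
  revert f. induction s using Z.peano_ind; intros f G.
  - apply zsum2_ext. intros. rewrite Z.add_0_r. auto.
  - set (F := fun m n => f m (n + 1)%Z).
    assert (GF : Gb F). { apply (Gb_ext (fun m n => f (m + 0)%Z (n + 1)%Z)); [intros; unfold F; rewrite Z.add_0_r; auto|]. apply Gb_shift; auto. }
    rewrite (zsum2_ext _ (fun m n => F m (n + s)%Z)).
    2:{ intros. unfold F. f_equal. lia. }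
    rewrite IHs; auto. apply zsum2_shift_n1; auto.
  - set (F := fun m n => f m (n - 1)%Z).
    assert (GF : Gb F). { apply (Gb_ext (fun m n => f (m + 0)%Z (n + -1)%Z)); [intros; unfold F; f_equal; lia|]. apply Gb_shift; auto. }
    rewrite (zsum2_ext _ (fun m n => F m (n + s)%Z)).
    2:{ intros. unfold F. f_equal. lia. }
    rewrite IHs; auto.
    rewrite <- (zsum2_shift_n1 F GF). apply zsum2_ext. intros. unfold F. f_equal. lia.
Qed.

Lemma zsum2_shift f r s : Gb f -> zsum2 (fun m n => f (m + r)%Z (n + s)%Z) = zsum2 f.
Proof.
  intro G. rewrite (zsum2_shift_n (fun m n => f (m + r)%Z n)).
  - apply zsum2_shift_m; auto.
  - apply (Gb_ext (fun m n => f (m + r)%Z (n + 0)%Z)); [intros; rewrite Z.add_0_r; auto|].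
    apply Gb_shift; auto.
Qed.

Lemma Cmod_ephase th x : Cmod (ephase th x) = 1.
Proof.
  unfold Cmod, ephase. simpl.
  replace (cos (2 * PI * th * x) * (cos (2 * PI * th * x) * 1) + sin (2 * PI * th * x) * (sin (2 * PI * th * x) * 1)) with 1.
  - apply sqrt_1.
  - pose proof (sin2_cos2 (2 * PI * th * x)). unfold Rsqr in H. lra.
Qed.

Lemma ephase_mul th x y : (ephase th x * ephase th y)%C = ephase th (x + y).
Proof.
  unfold ephase, Cmult. simpl.
  replace (2 * PI * th * (x + y)) with (2 * PI * th * x + 2 * PI * th * y) by ring.
  rewrite cos_plus, sin_plus. f_equal; ring.
Qed.

Lemma ephase_conj th x : Cconj (ephase th x) = ephase th (- x).
Proof.
  unfold ephase, Cconj. simpl.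
  replace (2 * PI * th * - x) with (- (2 * PI * th * x)) by ring.
  rewrite cos_neg, sin_neg. reflexivity.
Qed.

Definition ez th (k : Z) := ephase th (IZR k).

Lemma ez_mul th a b : (ez th a * ez th b)%C = ez th (a + b).
Proof. unfold ez. rewrite ephase_mul, plus_IZR. reflexivity. Qed.
Lemma ez_conj th a : Cconj (ez th a) = ez th (- a).
Proof. unfold ez. rewrite ephase_conj, opp_IZR. reflexivity. Qed.

Definition lin (al be : C) (m n : Z) : C := (al * RtoC (IZR m) + be * RtoC (IZR n))%C.
Definition mulf (c : Z -> Z -> C) (a : coef) : coef := fun m n => (c m n * a m n)%C.

Lemma lin_add al be m n r s :
  lin al be r s = (lin al be m n + lin al be (r - m) (s - n))%C.
Proof.
  unfold lin. rewrite !minus_IZR. rewrite !RtoC_minus. ring.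
Qed.

Lemma Cmod_lin al be m n :
  Cmod (lin al be m n) <= (Cmod al + Cmod be) * (1 + IZR (Z.abs m) + IZR (Z.abs n)).
Proof.
  unfold lin. eapply Rle_trans; [apply Cmod_triangle|].
  rewrite !Cmod_mult, !Cmod_R, <- !abs_IZR.
  pose proof (Cmod_ge_0 al). pose proof (Cmod_ge_0 be).
  pose proof (absZ_ge0 m). pose proof (absZ_ge0 n).
  pose proof (Rmult_le_pos _ _ H H2). pose proof (Rmult_le_pos _ _ H0 H1). nra.
Qed.

Definition Abs m n := 1 + IZR (Z.abs m) + IZR (Z.abs n).
Lemma Abs_ge1 m n : 1 <= Abs m n.
Proof. unfold Abs. pose proof (absZ_ge0 m). pose proof (absZ_ge0 n). lra. Qed.

Lemma sch_mulf al be a : schwartz a -> schwartz (mulf (lin al be) a).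
Proof.
  intros H k. destruct (H (S k)) as [M HM].
  exists ((Cmod al + Cmod be) * M). intros m n. unfold mulf.
  rewrite Cmod_mult. specialize (HM m n). pose proof (Cmod_lin al be m n).
  fold (Abs m n) in *. pose proof (Abs_ge1 m n).
  pose proof (Cmod_ge_0 (a m n)). pose proof (Cmod_ge_0 (lin al be m n)).
  pose proof (Cmod_ge_0 al). pose proof (Cmod_ge_0 be).
  assert (0 <= Abs m n ^ k) by (apply pow_le; lra).
  simpl in HM.
  apply Rle_trans with (Abs m n ^ k * ((Cmod al + Cmod be) * Abs m n) * Cmod (a m n)).
  - rewrite <- Rmult_assoc. apply Rmult_le_compat_r; auto. apply Rmult_le_compat_l; auto.
  - replace (Abs m n ^ k * ((Cmod al + Cmod be) * Abs m n) * Cmod (a m n))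
      with ((Cmod al + Cmod be) * (Abs m n * Abs m n ^ k * Cmod (a m n))) by ring.
    apply Rmult_le_compat_l; lra.
Qed.

Lemma sch_bdd a : schwartz a -> exists B, 0 <= B /\ forall m n, Cmod (a m n) <= B.
Proof.
  intros H. destruct (H 0%nat) as [M HM]. exists M. split.
  - specialize (HM 0%Z 0%Z). simpl in HM. pose proof (Cmod_ge_0 (a 0%Z 0%Z)). lra.
  - intros m n. specialize (HM m n). simpl in HM. lra.
Qed.

Lemma sch_Gb a : schwartz a -> Gb a.
Proof.
  intros H. destruct (H 4%nat) as [M HM]. exists M.
  assert (HM0: 0 <= M).
  { specialize (HM 0%Z 0%Z). pose proof (Cmod_ge_0 (a 0%Z 0%Z)).
    assert (0 <= (1 + IZR (Z.abs 0) + IZR (Z.abs 0)) ^ 4) by (apply pow_le; simpl; lra). nra. }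
  split; auto. intros m n. specialize (HM m n).
  pose proof (absZ_ge0 m). pose proof (absZ_ge0 n). pose proof (Cmod_ge_0 (a m n)).
  unfold w.
  set (x := IZR (Z.abs m)) in *. set (y := IZR (Z.abs n)) in *. set (c := Cmod (a m n)) in *.
  assert (HP: 0 <= (1 + x) * (1 + y) <= (1 + x + y) ^ 2) by nra.
  assert (HP2: ((1 + x) * (1 + y)) ^ 2 <= (1 + x + y) ^ 4).
  { replace ((1 + x + y) ^ 4) with (((1 + x + y) ^ 2) ^ 2) by ring. apply pow_incr. lra. }
  assert (c * ((1 + x) * (1 + y)) ^ 2 <= M).
  { eapply Rle_trans; [|exact HM]. rewrite Rmult_comm. apply Rmult_le_compat_r; lra. }
  replace (M * / (1 + x) ^ 2 * / (1 + y) ^ 2) with (M / ((1 + x) * (1 + y)) ^ 2) by (field; lra).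
  apply Rle_div_r; [apply pow_lt; nra|]. lra.
Qed.

Definition T th (a b : coef) (r s : Z) : Z -> Z -> C :=
  fun m n => (a m n * b (r - m)%Z (s - n)%Z * ephase th (IZR (n * (r - m))))%C.

Lemma mul_T th a b r s : nct_mul th a b r s = zsum2 (T th a b r s).
Proof. reflexivity. Qed.

Lemma Gterm th a b r s : schwartz a -> (exists B, 0 <= B /\ forall m n, Cmod (b m n) <= B) ->
  Gb (T th a b r s).
Proof.
  intros Ha [B [HB Hb]]. destruct (sch_Gb a Ha) as [K [HK H]].
  exists (K * B). split; [apply Rmult_le_pos; auto|].
  intros m n. unfold T. rewrite !Cmod_mult, Cmod_ephase.
  pose proof (H m n). pose proof (Hb (r - m)%Z (s - n)%Z).
  pose proof (w_pos m). pose proof (w_pos n). pose proof (Cmod_ge_0 (a m n)).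
  pose proof (Cmod_ge_0 (b (r - m)%Z (s - n)%Z)).
  replace (K * B * w m * w n) with ((K * w m * w n) * B) by ring.
  rewrite Rmult_1_r. apply Rmult_le_compat; auto.
Qed.

Lemma leibniz th al be a b : schwartz a -> schwartz b ->
  mulf (lin al be) (nct_mul th a b) =
  nct_add (nct_mul th (mulf (lin al be) a) b) (nct_mul th a (mulf (lin al be) b)).
Proof.
  intros Ha Hb. apply functional_extensionality; intro r; apply functional_extensionality; intro s.
  unfold mulf at 1. unfold nct_add. rewrite !mul_T.
  assert (H0 := has_zsum_Gb _ (Gterm th a b r s Ha (sch_bdd b Hb))).
  assert (H1 := has_zsum_Gb _ (Gterm th (mulf (lin al be) a) b r s (sch_mulf al be a Ha) (sch_bdd b Hb))).
  assert (H2 := has_zsum_Gb _ (Gterm th a (mulf (lin al be) b) r s Ha (sch_bdd _ (sch_mulf al be b Hb)))).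
  pose proof (has_zsum_plus _ _ _ _ H1 H2) as X.
  pose proof (has_zsum_scal (lin al be r s) _ _ H0) as Y.
  symmetry. apply (has_zsum_unique (fun m n => (lin al be r s * T th a b r s m n)%C)); auto.
  eapply has_zsum_ext; [| |exact X]; auto.
  intros m n. unfold T, mulf. rewrite (lin_add al be m n r s). ring.
Qed.

Lemma mul_scal_r th a b c : schwartz a -> schwartz b ->
  nct_mul th a (fun m n => c * b m n)%C = fun r s => (c * nct_mul th a b r s)%C.
Proof.
  intros Ha Hb. apply functional_extensionality; intro r; apply functional_extensionality; intro s.
  rewrite !mul_T.
  assert (H0 := has_zsum_Gb _ (Gterm th a b r s Ha (sch_bdd b Hb))).
  apply zsum2_unique. pose proof (has_zsum_scal c _ _ H0) as Y.
  eapply has_zsum_ext; [| |exact Y]; auto. intros; unfold T; ring.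
Qed.

Lemma mul_scal_l th a b c : schwartz a -> schwartz b ->
  nct_mul th (fun m n => c * a m n)%C b = fun r s => (c * nct_mul th a b r s)%C.
Proof.
  intros Ha Hb. apply functional_extensionality; intro r; apply functional_extensionality; intro s.
  rewrite !mul_T.
  assert (H0 := has_zsum_Gb _ (Gterm th a b r s Ha (sch_bdd b Hb))).
  apply zsum2_unique. pose proof (has_zsum_scal c _ _ H0) as Y.
  eapply has_zsum_ext; [| |exact Y]; auto. intros; unfold T; ring.
Qed.

Lemma sch_star th a : schwartz a -> schwartz (nct_star th a).
Proof.
  intros H k. destruct (H k) as [M HM]. exists M. intros m n.
  unfold nct_star. rewrite Cmod_mult, Cmod_ephase, Cmod_conj, Rmult_1_r.
  specialize (HM (- m)%Z (- n)%Z). rewrite !Z.abs_opp in HM. auto.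
Qed.

Lemma star_zero th : nct_star th nct_zero = nct_zero.
Proof.
  apply functional_extensionality; intro; apply functional_extensionality; intro.
  unfold nct_star, nct_zero. apply injective_projections; simpl; ring.
Qed.

Lemma star_mulf th al be a :
  nct_star th (mulf (lin al be) a) = mulf (lin (- Cconj al) (- Cconj be)) (nct_star th a).
Proof.
  apply functional_extensionality; intro m; apply functional_extensionality; intro n.
  unfold nct_star, mulf, lin. rewrite !opp_IZR.
  rewrite !Cmult_conj, !Cplus_conj, !Cmult_conj.
  replace (Cconj (RtoC (- IZR m))) with (- RtoC (IZR m))%C by (apply injective_projections; simpl; ring).
  replace (Cconj (RtoC (- IZR n))) with (- RtoC (IZR n))%C by (apply injective_projections; simpl; ring).
  ring.
Qed.

Lemma star_mul th a b : schwartz a -> schwartz b ->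
  nct_star th (nct_mul th a b) = nct_mul th (nct_star th b) (nct_star th a).
Proof.
  intros Ha Hb. apply functional_extensionality; intro r; apply functional_extensionality; intro s.
  unfold nct_star at 1. rewrite !mul_T.
  set (F := T th a b (- r) (- s)).
  assert (HF := has_zsum_Gb _ (Gterm th a b (- r) (- s) Ha (sch_bdd b Hb))).
  fold F in HF.
  pose proof (has_zsum_scal (ephase th (IZR (r * s))) _ _ (has_zsum_conj _ _ HF)) as X.
  assert (GT := Gterm th (nct_star th b) (nct_star th a) r s (sch_star th b Hb) (sch_bdd _ (sch_star th a Ha))).
  rewrite <- (zsum2_shift _ r s GT).
  rewrite Cmult_comm. symmetry. apply zsum2_unique.
  eapply has_zsum_ext; [| |exact X]; auto.
  intros m n. unfold F, T, nct_star.
  replace (- (r - (m + r)))%Z with m by ring.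
  replace (- (s - (n + s)))%Z with n by ring.
  replace (- (m + r))%Z with (- r - m)%Z by ring.
  replace (- (n + s))%Z with (- s - n)%Z by ring.
  fold (ez th (r * s)). fold (ez th (n * (- r - m))).
  fold (ez th ((m + r) * (n + s))). fold (ez th ((r - (m + r)) * (s - (n + s)))).
  fold (ez th ((n + s) * (r - (m + r)))).
  rewrite !Cmult_conj, ez_conj.
  transitivity (Cconj (a m n) * Cconj (b (- r - m)%Z (- s - n)%Z) * (ez th (r * s) * ez th (- (n * (- r - m)))))%C.
  { ring. }
  transitivity (Cconj (a m n) * Cconj (b (- r - m)%Z (- s - n)%Z) *
     (ez th ((m + r) * (n + s)) * ez th ((r - (m + r)) * (s - (n + s))) * ez th ((n + s) * (r - (m + r)))))%C.
  2:{ ring. }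
  rewrite !ez_mul. f_equal. f_equal. ring.
Qed.

Lemma core th a1 b1 a2 b2 p : schwartz p -> p = nct_mul th p p ->
  nct_mul th (mulf (lin a2 b2) p) p = nct_zero ->
  nct_mul th p (mulf (lin a1 b1) p) = nct_zero ->
  nct_mul th p (mulf (lin a1 b1) (mulf (lin a2 b2) p)) =
  nct_mul th (mulf (lin a1 b1) (mulf (lin a2 b2) p)) p.
Proof.
  intros Hs Hpp H2 H1.
  set (c1 := lin a1 b1) in *. set (c2 := lin a2 b2) in *.
  assert (S1 : schwartz (mulf c1 p)) by (apply sch_mulf; auto).
  assert (S2 : schwartz (mulf c2 p)) by (apply sch_mulf; auto).
  assert (E2 : mulf c2 p = nct_mul th p (mulf c2 p)).
  { transitivity (mulf c2 (nct_mul th p p)); [rewrite <- Hpp; auto|].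
    unfold c2; rewrite leibniz; auto. fold c2. rewrite H2.
    apply functional_extensionality; intro; apply functional_extensionality; intro.
    unfold nct_add, nct_zero. ring. }
  assert (E1 : mulf c1 p = nct_mul th (mulf c1 p) p).
  { transitivity (mulf c1 (nct_mul th p p)); [rewrite <- Hpp; auto|].
    unfold c1; rewrite leibniz; auto. fold c1. rewrite H1.
    apply functional_extensionality; intro; apply functional_extensionality; intro.
    unfold nct_add, nct_zero. ring. }
  assert (F1 : mulf c1 (mulf c2 p) = nct_add (nct_mul th (mulf c1 p) (mulf c2 p))
                                            (nct_mul th p (mulf c1 (mulf c2 p)))).
  { transitivity (mulf c1 (nct_mul th p (mulf c2 p))); [rewrite <- E2; auto|].
    unfold c1; rewrite leibniz; auto. }
  assert (F2 : mulf c2 (mulf c1 p) = nct_add (nct_mul th (mulf c2 (mulf c1 p)) p)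
                                            (nct_mul th (mulf c1 p) (mulf c2 p))).
  { transitivity (mulf c2 (nct_mul th (mulf c1 p) p)); [rewrite <- E1; auto|].
    unfold c2; rewrite leibniz; auto. }
  assert (Cm : mulf c2 (mulf c1 p) = mulf c1 (mulf c2 p)).
  { apply functional_extensionality; intro; apply functional_extensionality; intro.
    unfold mulf. ring. }
  rewrite Cm in F2.
  apply functional_extensionality; intro r; apply functional_extensionality; intro s.
  pose proof (f_equal (fun f => f r s) F1) as G1.
  pose proof (f_equal (fun f => f r s) F2) as G2.
  simpl in G1, G2. unfold nct_add in G1, G2.
  rewrite G2 in G1.
  apply (f_equal (fun z => z - nct_mul th (mulf c1 p) (mulf c2 p) r s)%C) in G1.
  symmetry. replace (nct_mul th (mulf c1 (mulf c2 p)) p r s) with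
    (nct_mul th (mulf c1 (mulf c2 p)) p r s + nct_mul th (mulf c1 p) (mulf c2 p) r s -
     nct_mul th (mulf c1 p) (mulf c2 p) r s)%C by ring.
  rewrite G1. ring.
Qed.

Section Tau.
Definition aD (tau : C) : C := (- (PI * fst tau / snd tau), PI).
Definition bD (tau : C) : C := (PI / snd tau, 0).
Definition aDb (tau : C) : C := (PI * fst tau / snd tau, PI).
Definition bDb (tau : C) : C := (- (PI / snd tau), 0).
End Tau.

Lemma dtau_lin tau a : 0 < snd tau -> dtau tau a = mulf (lin (aD tau) (bD tau)) a.
Proof.
  intro Hy. destruct tau as [x y]. simpl in Hy.
  apply functional_extensionality; intro m; apply functional_extensionality; intro n.
  unfold dtau, nct_scal, nct_add, d1, d2, mulf, lin, aD, bD, Cconj.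
  apply injective_projections; simpl; field; nra.
Qed.

Lemma dbartau_lin tau a : 0 < snd tau -> dbartau tau a = mulf (lin (aDb tau) (bDb tau)) a.
Proof.
  intro Hy. destruct tau as [x y]. simpl in Hy.
  apply functional_extensionality; intro m; apply functional_extensionality; intro n.
  unfold dbartau, nct_scal, nct_add, d1, d2, mulf, lin, aDb, bDb, Cconj.
  apply injective_projections; simpl; field; nra.
Qed.

Lemma lap_lin tau a : 0 < snd tau ->
  lap tau a = fun m n => (4 * mulf (lin (aD tau) (bD tau)) (mulf (lin (aDb tau) (bDb tau)) a) m n)%C.
Proof.
  intro Hy. destruct tau as [x y]. simpl in Hy.
  apply functional_extensionality; intro m; apply functional_extensionality; intro n.
  unfold lap, ginv, nct_scal, nct_add, d1, d2, mulf, lin, aD, bD, aDb, bDb.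
  apply injective_projections; simpl; field; nra.
Qed.

Lemma conj_D tau : (- Cconj (aDb tau))%C = aD tau /\ (- Cconj (bDb tau))%C = bD tau /\
                   (- Cconj (aD tau))%C = aDb tau /\ (- Cconj (bD tau))%C = bDb tau.
Proof.
  unfold aD, bD, aDb, bDb, Cconj.
  repeat split; apply injective_projections; simpl; ring.
Qed.

Theorem mainTheorem2 (theta : R) (tau : C) (p : coef) :
  0 < Im tau ->
  schwartz p ->
  p = nct_mul theta p p ->
  p = nct_star theta p ->
  (nct_mul theta (dbartau tau p) p = nct_zero \/
   nct_mul theta p (dtau tau p) = nct_zero \/
   nct_mul theta (dtau tau p) p = nct_zero \/
   nct_mul theta p (dbartau tau p) = nct_zero) ->
  nct_add (nct_mul theta p (lap tau p))
          (nct_scal (-1)%C (nct_mul theta (lap tau p) p)) = nct_zero.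
Proof.
  intros Hy Hs Hpp Hst Hcase.
  unfold Im in Hy.
  rewrite (dtau_lin tau p Hy), (dbartau_lin tau p Hy) in Hcase.
  rewrite (lap_lin tau p Hy).
  destruct (conj_D tau) as [C1 [C2 [C3 C4]]].
  set (X := mulf (lin (aD tau) (bD tau)) (mulf (lin (aDb tau) (bDb tau)) p)).
  assert (SX : schwartz X) by (unfold X; do 2 apply sch_mulf; auto).
  assert (SD : schwartz (mulf (lin (aD tau) (bD tau)) p)) by (apply sch_mulf; auto).
  assert (SDb : schwartz (mulf (lin (aDb tau) (bDb tau)) p)) by (apply sch_mulf; auto).
  assert (EQ : nct_mul theta p X = nct_mul theta X p).
  { assert (HAC : (nct_mul theta (mulf (lin (aDb tau) (bDb tau)) p) p = nct_zero /\
                   nct_mul theta p (mulf (lin (aD tau) (bD tau)) p) = nct_zero) \/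
                  (nct_mul theta (mulf (lin (aD tau) (bD tau)) p) p = nct_zero /\
                   nct_mul theta p (mulf (lin (aDb tau) (bDb tau)) p) = nct_zero)).
    { destruct Hcase as [H | [H | [H | H]]].
      - left. split; auto.
        assert (Z := f_equal (nct_star theta) H). rewrite star_zero, star_mul in Z; auto.
        rewrite star_mulf, C1, C2, <- Hst in Z. auto.
      - left. split; auto.
        assert (Z := f_equal (nct_star theta) H). rewrite star_zero, star_mul in Z; auto.
        rewrite star_mulf, C3, C4, <- Hst in Z. auto.
      - right. split; auto.
        assert (Z := f_equal (nct_star theta) H). rewrite star_zero, star_mul in Z; auto.
        rewrite star_mulf, C3, C4, <- Hst in Z. auto.
      - right. split; auto.
        assert (Z := f_equal (nct_star theta) H). rewrite star_zero, star_mul in Z; auto.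
        rewrite star_mulf, C1, C2, <- Hst in Z. auto. }
    destruct HAC as [[H1 H2] | [H1 H2]].
    - unfold X. apply core; auto.
    - assert (Cm : X = mulf (lin (aDb tau) (bDb tau)) (mulf (lin (aD tau) (bD tau)) p)).
      { unfold X. apply functional_extensionality; intro; apply functional_extensionality; intro.
        unfold mulf. ring. }
      rewrite Cm. apply core; auto. }
  fold X. rewrite mul_scal_r, mul_scal_l; auto. rewrite EQ.
  apply functional_extensionality; intro; apply functional_extensionality; intro.
  unfold nct_add, nct_scal, nct_zero. ring.
Qed.
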